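(* Let $\mathcal{S}=\{s_1,\dots,s_N\}$ be a finite state space, $\mathcal{A}$ a finite action space, $\gamma\in(0,1)$, and consider the real MDP $\langle\mathcal{S},\mathcal{A},\mathbb{P},R,\gamma\rangle$ and the DT MDP $\langle\mathcal{S},\mathcal{A},\mathbb{P}',R',\gamma\rangle$. Let $R_{\max}=\max_{i,j,a}|R(s_i,a)-R'(s_j,a)|$, let $d_0:\mathcal{S}\times\mathcal{S}\to[0,\frac{R_{\max}}{1-\gamma}]$ be the constant zero function, and for $n\ge1$ define $$d_n(s_i,s_j)=\max_a\Big\{|R(s_i,a)-R'(s_j,a)|+\gamma W_1\big(\mathbb{P}(\cdot|s_i,a),\mathbb{P}'(\cdot|s_j,a);d_{n-1}\big)\Big\}.$$ Then $d_n$ converges uniformly, as $n\to\infty$, to a map $\bar d:\mathcal{S}\times\mathcal{S}\to[0,\frac{R_{\max}}{1-\gamma}]$ which is a fixed point of the recursion, i.e. $\bar d(s_i,s_j)=\max_a\{|R(s_i,a)-R'(s_j,a)|+\gamma W_1(\mathbb{P}(\cdot|s_i,a),\mathbb{P}'(\cdot|s_j,a);\bar d)\}$ for all $i,j$, and for all $n$ and all $i,j$, $$\bar d(s_i,s_j)-d_n(s_i,s_j)\le\frac{\gamma^nR_{\max}}{1-\gamma}.$$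
   Context: $\mathbb{P}(\cdot|s,a),\mathbb{P}'(\cdot|s,a)$ are probability distributions on $\mathcal{S}$; $R,R':\mathcal{S}\times\mathcal{A}\to\mathbb{R}$. For probability distributions $P,Q$ on $\mathcal{S}$ and a cost $d:\mathcal{S}\times\mathcal{S}\to[0,\infty)$ (not required to vanish on the diagonal; first argument a state of the real MDP, second a state of the DT MDP), $W_1(P,Q;d)=\min_{\Lambda}\sum_{i,j}\lambda_{i,j}d(s_i,s_j)$, over nonnegative $N\times N$ matrices $\Lambda=(\lambda_{i,j})$ with row sums $\sum_j\lambda_{i,j}=P(s_i)$ and column sums $\sum_i\lambda_{i,j}=Q(s_j)$. *)

(* Defs.v *)
From HB Require Import structures.
From mathcomp Require Import all_boot all_order all_algebra.
From mathcomp Require Import boolp classical_sets reals.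
Set Implicit Arguments. Unset Strict Implicit. Unset Printing Implicit Defensive.
Import Order.TTheory GRing.Theory Num.Theory.
Local Open Scope ring_scope.
Local Open Scope classical_set_scope.

Section Defs.
Variables (R : realType) (N : nat) (A : finType).

Definition is_distr (P : 'I_N -> R) : Prop :=
  (forall i, 0 <= P i) /\ \sum_(i < N) P i = 1.

(* couplings Lambda of P and Q (first index: real MDP state, second: DT state) *)
Definition coupling (P Q : 'I_N -> R) (L : 'I_N -> 'I_N -> R) : Prop :=
  [/\ forall i j, 0 <= L i j,
      forall i, \sum_(j < N) L i j = P i &
      forall j, \sum_(i < N) L i j = Q j].

(* W_1(P,Q;d) = min over couplings of the transport cost (taken as the infimum
   of the set of attainable costs; the minimum is attained) *)
Definition W1 (P Q : 'I_N -> R) (d : 'I_N -> 'I_N -> R) : R :=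
  inf [set c | exists L, coupling P Q L /\
                 c = \sum_(i < N) \sum_(j < N) L i j * d i j].

Definition bisim_step (P P' : 'I_N -> A -> 'I_N -> R) (Rw Rw' : 'I_N -> A -> R)
  (gamma : R) (d : 'I_N -> 'I_N -> R) : 'I_N -> 'I_N -> R :=
  fun i j => \big[Num.max/0]_(a : A)
     (`|Rw i a - Rw' j a| + gamma * W1 (P i a) (P' j a) d).

Fixpoint dseq (P P' : 'I_N -> A -> 'I_N -> R) (Rw Rw' : 'I_N -> A -> R)
  (gamma : R) (n : nat) : 'I_N -> 'I_N -> R :=
  match n with
  | 0%N => fun _ _ => 0
  | n'.+1 => bisim_step P P' Rw Rw' gamma (dseq P P' Rw Rw' gamma n')
  end.

Definition Rmax (Rw Rw' : 'I_N -> A -> R) : R :=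
  \big[Num.max/0]_(i < N) \big[Num.max/0]_(j < N) \big[Num.max/0]_(a : A)
     `|Rw i a - Rw' j a|.

End Defs.

(* Main.v *)
Require Import Defs.
From HB Require Import structures.
From mathcomp Require Import all_boot all_order all_algebra.
From mathcomp Require Import boolp classical_sets reals.
From mathcomp Require Import lra.
Import Order.TTheory GRing.Theory Num.Theory.
Local Open Scope ring_scope.

Lemma coup_exists {R : realType} {N : nat} {P Q : 'I_N -> R} :
  is_distr P -> is_distr Q -> exists L, coupling P Q L.
Proof.
move=> [P0 P1] [Q0 Q1]; exists (fun i j => P i * Q j); split.
- by move=> i j; rewrite mulr_ge0.
- by move=> i; rewrite -mulr_sumr Q1 mulr1.
- by move=> j; rewrite -mulr_suml P1 mul1r.
Qed.

Lemma coup_sum {R : realType} {N : nat} {P Q : 'I_N -> R} (L : 'I_N -> 'I_N -> R) :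
  is_distr P -> coupling P Q L -> \sum_(i < N) \sum_(j < N) L i j = 1.
Proof.
move=> [_ P1] [_ rL _]; rewrite -P1; apply: eq_bigr => i _; exact: rL.
Qed.

Lemma W1_set_lb {R : realType} {N : nat} {P Q : 'I_N -> R} (d : 'I_N -> 'I_N -> R) :
  (forall i j, 0 <= d i j) ->
  lbound [set c | exists L, coupling P Q L /\
                 c = \sum_(i < N) \sum_(j < N) L i j * d i j] 0.
Proof.
move=> d0 c [L [[L0 _ _] ->]].
by apply: sumr_ge0 => i _; apply: sumr_ge0 => j _; rewrite mulr_ge0.
Qed.

Lemma W1_ge0 {R : realType} {N : nat} {P Q : 'I_N -> R} (d : 'I_N -> 'I_N -> R) :
  is_distr P -> is_distr Q -> (forall i j, 0 <= d i j) -> 0 <= W1 P Q d.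
Proof.
move=> dP dQ d0; apply: lb_le_inf; last exact: W1_set_lb.
by have [L cL] := coup_exists dP dQ; eexists; exists L; split.
Qed.

Lemma W1_0 {R : realType} {N : nat} {P Q : 'I_N -> R} :
  is_distr P -> is_distr Q -> W1 P Q (fun _ _ => 0) = 0.
Proof.
move=> dP dQ; apply/eqP; rewrite eq_le W1_ge0 // andbT.
have [L cL] := coup_exists dP dQ.
apply: (le_trans (ge_inf _ _)).
- by exists 0; apply: W1_set_lb.
- by exists L; split; first exact: cL.
by rewrite big1 // => i _; rewrite big1 // => j _; rewrite mulr0.
Qed.

Lemma W1_le {R : realType} {N : nat} {P Q : 'I_N -> R} (d d' : 'I_N -> 'I_N -> R) (e : R) :
  is_distr P -> is_distr Q -> (forall i j, 0 <= d i j) -> (forall i j, 0 <= d' i j) ->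
  (forall i j, d i j <= d' i j + e) -> W1 P Q d <= W1 P Q d' + e.
Proof.
move=> dP dQ d0 d'0 dd; rewrite -lerBlDr.
have [L cL] := coup_exists dP dQ.
apply: lb_le_inf; first by eexists; exists L; split.
move=> c [L' [cL' ->]].
apply: (@le_trans _ _ (\sum_(i < N) \sum_(j < N) L' i j * d i j - e)).
  rewrite lerD2r; apply: ge_inf; first by exists 0; apply: W1_set_lb.
  by exists L'; split.
rewrite lerBlDr.
apply: (@le_trans _ _ (\sum_(i < N) \sum_(j < N) L' i j * (d' i j + e))).
  apply: ler_sum => i _; apply: ler_sum => j _; apply: ler_wpM2l => //.
  by case: cL' => L0 _ _.
rewrite le_eqVlt; apply/orP; left; apply/eqP.

under eq_bigr do under eq_bigr do rewrite mulrDr.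
under eq_bigr do rewrite big_split /=.
rewrite big_split /=; congr (_ + _).
rewrite -[RHS]mul1r -(coup_sum L' dP cL') mulr_suml; apply: eq_bigr => i _.
by rewrite mulr_suml.
Qed.

Lemma bigmax0_ge0 {R : realType} {I : finType} (F : I -> R) :
  (forall a, 0 <= F a) -> 0 <= \big[Num.max/0]_(a : I) F a.
Proof.
move=> F0; elim/big_ind: _ => // x y x0 y0.
by rewrite le_max x0.
Qed.

Lemma T_ge0 {R : realType} {N : nat} {A : finType}
  (P P' : 'I_N -> A -> 'I_N -> R) (Rw Rw' : 'I_N -> A -> R) (gamma : R)
  (d : 'I_N -> 'I_N -> R) :
  0 <= gamma -> (forall i a, is_distr (P i a)) -> (forall j a, is_distr (P' j a)) ->
  (forall i j, 0 <= d i j) -> forall i j, 0 <= bisim_step P P' Rw Rw' gamma d i j.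
Proof.
move=> g0 dP dP' d0 i j; apply: bigmax0_ge0 => a.
by rewrite addr_ge0 // mulr_ge0 // W1_ge0.
Qed.

Lemma T_le {R : realType} {N : nat} {A : finType}
  (P P' : 'I_N -> A -> 'I_N -> R) (Rw Rw' : 'I_N -> A -> R) (gamma : R)
  (d d' : 'I_N -> 'I_N -> R) (e : R) :
  0 <= gamma -> (forall i a, is_distr (P i a)) -> (forall j a, is_distr (P' j a)) ->
  (forall i j, 0 <= d i j) -> (forall i j, 0 <= d' i j) -> 0 <= e ->
  (forall i j, d i j <= d' i j + e) ->
  forall i j, bisim_step P P' Rw Rw' gamma d i j
              <= bisim_step P P' Rw Rw' gamma d' i j + gamma * e.
Proof.
move=> g0 dP dP' d0 d'0 e0 dd i j.
apply: bigmax_le.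
  by rewrite addr_ge0 ?mulr_ge0 // T_ge0.
move=> a _.
apply: (@le_trans _ _ ((`|Rw i a - Rw' j a| + gamma * W1 (P i a) (P' j a) d') + gamma * e)).
  rewrite -addrA lerD2l -mulrDr ler_wpM2l //; exact: W1_le.
rewrite lerD2r; exact: (le_bigmax _ (fun a => `|Rw i a - Rw' j a| + gamma * W1 (P i a) (P' j a) d') a).
Qed.

Lemma Rmax_ge0 {R : realType} {N : nat} {A : finType} (Rw Rw' : 'I_N -> A -> R) :
  0 <= Rmax Rw Rw'.
Proof. by apply: bigmax0_ge0 => i; apply: bigmax0_ge0 => j; apply: bigmax0_ge0. Qed.

Lemma Rmax_ub {R : realType} {N : nat} {A : finType} (Rw Rw' : 'I_N -> A -> R) i j a :
  `|Rw i a - Rw' j a| <= Rmax Rw Rw'.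
Proof.
rewrite /Rmax.
apply: le_trans (le_bigmax _ (fun i => \big[Num.max/0]_(j < N) \big[Num.max/0]_(a : A)
     `|Rw i a - Rw' j a|) i).
apply: le_trans (le_bigmax _ (fun j => \big[Num.max/0]_(a : A)
     `|Rw i a - Rw' j a|) j).
exact: (le_bigmax _ (fun a => `|Rw i a - Rw' j a|) a).
Qed.

Lemma dseq_props {R : realType} {N : nat} {A : finType}
  (P P' : 'I_N -> A -> 'I_N -> R) (Rw Rw' : 'I_N -> A -> R) (gamma : R) :
  0 <= gamma -> (forall i a, is_distr (P i a)) -> (forall j a, is_distr (P' j a)) ->
  forall n, [/\ forall i j, 0 <= dseq P P' Rw Rw' gamma n i j,
     forall i j, dseq P P' Rw Rw' gamma n i j <= dseq P P' Rw Rw' gamma n.+1 i j &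
     forall i j, dseq P P' Rw Rw' gamma n.+1 i j
        <= dseq P P' Rw Rw' gamma n i j + gamma ^+ n * Rmax Rw Rw'].
Proof.
move=> g0 dP dP'; elim=> [|n [H0 H1 H2]].
  have d10 : forall i j, 0 <= dseq P P' Rw Rw' gamma 1 i j.
    by apply: T_ge0.
  split => // i j; rewrite /= add0r expr0 mul1r.
  apply: bigmax_le; first exact: Rmax_ge0.
  by move=> a _; rewrite W1_0 // mulr0 addr0 Rmax_ub.
have Hn1 : forall i j, 0 <= dseq P P' Rw Rw' gamma n.+1 i j.
  by move=> i j; apply: le_trans (H1 i j).
split => // i j.
- rewrite [X in _ <= X]/= [X in X <= _]/=.
  rewrite -[X in _ <= X]addr0 -(mulr0 gamma).
  apply: T_le => // i' j'; rewrite addr0; exact: H1.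
- rewrite [X in X <= _]/= [X in _ <= X + _]/= exprS -mulrA.
  apply: T_le => //; by rewrite mulr_ge0 // ?exprn_ge0 // Rmax_ge0.
Qed.

Lemma geom_small {R : realType} (gamma K e : R) :
  0 < gamma < 1 -> 0 <= K -> 0 < e -> exists M : nat, gamma ^+ M * K < e.
Proof.
move=> /andP[g0 g1] K0 e0.
have B : forall n : nat, gamma ^+ n * (1 + n%:R * (1 - gamma)) <= 1.
  elim=> [|n IH]; first by rewrite expr0 mul0r addr0 mulr1.
  have gn0 : 0 <= gamma ^+ n by rewrite exprn_ge0 // ltW.
  have gn1 : gamma ^+ n <= 1 by rewrite exprn_ile1 // ?ltW.
  have t0 : 0 <= n%:R :> R by rewrite ler0n.
  rewrite exprS -natr1.
  have h1 := ler_wpM2l (ltW g0) IH.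
  have h2 : gamma * gamma ^+ n * (1 - gamma) <= 1 - gamma.
    have h3 : gamma * gamma ^+ n <= 1 by rewrite mulr_ile1 // ltW.
    have c0 : 0 <= 1 - gamma by rewrite subr_ge0 ltW.
    by have := ler_wpM2r c0 h3; rewrite mul1r.
  nra.
set c := 1 - gamma.
have c0 : 0 < c by rewrite subr_gt0.
have x0 : 0 <= K / (e * c) by rewrite divr_ge0 // ltW // mulr_gt0.
have := archi_boundP x0; set M := Num.Def.archi_bound _ => HM.
exists M.
have HK : K < M%:R * (e * c) by rewrite -ltr_pdivrMr // mulr_gt0.
have := B M; rewrite -/c => BM.
have gM0 : 0 < gamma ^+ M by rewrite exprn_gt0.
have t0 : 0 <= M%:R :> R by rewrite ler0n.
nra.
Qed.

Lemma dseq_bound {R : realType} {N : nat} {A : finType}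
  (P P' : 'I_N -> A -> 'I_N -> R) (Rw Rw' : 'I_N -> A -> R) (gamma : R) :
  0 < gamma < 1 -> (forall i a, is_distr (P i a)) -> (forall j a, is_distr (P' j a)) ->
  forall m n i j, dseq P P' Rw Rw' gamma m i j
     <= dseq P P' Rw Rw' gamma n i j + gamma ^+ n * Rmax Rw Rw' / (1 - gamma).
Proof.
move=> /andP[g0 g1] dP dP' m n i j.
have PR := dseq_props P P' Rw Rw' gamma (ltW g0) dP dP'.
set d := dseq P P' Rw Rw' gamma.
have c0 : 0 < 1 - gamma by rewrite subr_gt0.
have M0 := Rmax_ge0 Rw Rw'.
have gn0 : 0 <= gamma ^+ n by rewrite exprn_ge0 // ltW.
have extra0 : 0 <= gamma ^+ n * Rmax Rw Rw' / (1 - gamma).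
  by rewrite divr_ge0 ?mulr_ge0 // ltW.
have mono : forall k p, d k i j <= d (k + p)%N i j.
  move=> k; elim=> [|p IH]; first by rewrite addn0.
  by apply: le_trans IH _; rewrite addnS; case: (PR (k + p)%N) => _ H _; exact: H.
case: (leqP m n) => [mn|nm].
  have := mono m (n - m)%N; rewrite subnKC // => h.
  by apply: le_trans h _; rewrite lerDl.
rewrite -(subnKC (ltnW nm)); set k := (m - n)%N.
have gap : forall k, (1 - gamma) * (d (n + k)%N i j - d n i j)
              <= Rmax Rw Rw' * gamma ^+ n * (1 - gamma ^+ k).
  elim=> [|k' IH]; first by rewrite addn0 subrr mulr0 expr0 subrr mulr0.
  rewrite addnS.
  case: (PR (n + k')%N) => _ _ /(_ i j) H.
  rewrite exprD in H.
  have gk0 : 0 <= gamma ^+ k' by rewrite exprn_ge0 // ltW.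
  have h : 0 <= (1 - gamma) * (d (n + k')%N i j + gamma ^+ n * gamma ^+ k' * Rmax Rw Rw' - d (n + k').+1 i j).
    by rewrite mulr_ge0 ?subr_ge0 // ltW.
  rewrite exprS.
  nra.
have gk0 : 0 <= gamma ^+ k by rewrite exprn_ge0 // ltW.
have := gap k; rewrite -lerBlDl mulrAC ler_pdivlMr // mulrC => h.
apply: le_trans h _.
have := mulr_ge0 (mulr_ge0 M0 gn0) gk0.
nra.
Qed.

Theorem theorem3 (R : realType) (N : nat) (A : finType)
  (P P' : 'I_N -> A -> 'I_N -> R) (Rw Rw' : 'I_N -> A -> R) (gamma : R) :
  0 < gamma < 1 ->
  (forall i a, is_distr (P i a)) ->
  (forall j a, is_distr (P' j a)) ->
  exists dbar : 'I_N -> 'I_N -> R,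
    [/\ (* range [0, R_max/(1-gamma)] *)
        (forall i j, 0 <= dbar i j <= Rmax Rw Rw' / (1 - gamma)),
        (* uniform convergence d_n -> dbar *)
        (forall e : R, 0 < e -> exists M : nat, forall n : nat, (M <= n)%N ->
            forall i j, `|dseq P P' Rw Rw' gamma n i j - dbar i j| < e),
        (* fixed point *)
        (forall i j, dbar i j = bisim_step P P' Rw Rw' gamma dbar i j) &
        (* error bound *)
        (forall (n : nat) i j,
            dbar i j - dseq P P' Rw Rw' gamma n i j
              <= gamma ^+ n * Rmax Rw Rw' / (1 - gamma))].
Proof.
move=> gg dP dP'; have /andP[g0 g1] := gg.
have PR := dseq_props P P' Rw Rw' gamma (ltW g0) dP dP'.
have DB := dseq_bound P P' Rw Rw' gamma gg dP dP'.
set d := dseq P P' Rw Rw' gamma in PR DB *.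
have c0 : 0 < 1 - gamma by rewrite subr_gt0.
have M0 := Rmax_ge0 Rw Rw'.
have K0 : 0 <= Rmax Rw Rw' / (1 - gamma) by rewrite divr_ge0 // ltW.
have E0 : forall n : nat, 0 <= gamma ^+ n * Rmax Rw Rw' / (1 - gamma).
  by move=> n; rewrite -mulrA mulr_ge0 // exprn_ge0 // ltW.
pose S i j := [set x : R | exists n, x = d n i j]%classic.
have hs : forall i j, has_sup (S i j).
  move=> i j; split; first by exists (d 0%N i j), 0%N.
  exists (d 0%N i j + gamma ^+ 0 * Rmax Rw Rw' / (1 - gamma)).
  by move=> x [n ->]; exact: DB.
have lo : forall n i j, d n i j <= sup (S i j).
  by move=> n i j; apply: sup_upper_bound; [exact: hs | exists n].
have hi : forall n i j, sup (S i j) <= d n i j + gamma ^+ n * Rmax Rw Rw' / (1 - gamma).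
  move=> n i j; apply: ge_sup; first by exists (d 0%N i j), 0%N.
  by move=> x [m ->]; exact: DB.
have dn0 : forall n i j, 0 <= d n i j by move=> n i j; case: (PR n).
have db0 : forall i j, 0 <= sup (S i j).
  by move=> i j; apply: le_trans (dn0 0%N i j) (lo 0%N i j).
exists (fun i j => sup (S i j)); split.
- move=> i j; rewrite db0 /=.
  by have := hi 0%N i j; rewrite expr0 mul1r /= add0r.
- move=> e e0.
  have [M HM] := geom_small _ _ _ gg K0 e0.
  exists M => n Mn i j.
  rewrite ler0_norm ?subr_le0 ?lo // opprB.
  apply: le_lt_trans HM; rewrite mulrA lerBlDl; apply: le_trans (hi n i j) _.
  rewrite lerD2l; apply: ler_wpM2r; first by rewrite invr_ge0 ltW.
  apply: ler_wpM2r => //; apply: ler_wiXn2l => //; exact: ltW.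
- move=> i j; apply/eqP; rewrite eq_le; apply/andP; split.
    apply: ge_sup; first by exists (d 0%N i j), 0%N.
    move=> x [[|n] ->].
      exact: (T_ge0 P P' Rw Rw' gamma (fun i j => sup (S i j)) (ltW g0) dP dP' db0 i j).
    have H : forall i j, d n i j <= sup (S i j) + 0 by move=> i' j'; rewrite addr0 lo.
    have := T_le P P' Rw Rw' gamma (d n) (fun i j => sup (S i j)) 0 (ltW g0) dP dP' (dn0 n) db0 (lexx 0) H i j.
    by rewrite mulr0 addr0 => h; exact: h.
  rewrite -subr_le0; case: lerP => // hpos.
  have [M HM] := geom_small _ _ _ gg K0 hpos.
  have h : bisim_step P P' Rw Rw' gamma (fun i j => sup (S i j)) i j
           <= sup (S i j) + gamma ^+ M * Rmax Rw Rw' / (1 - gamma).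
    have := T_le P P' Rw Rw' gamma (fun i j => sup (S i j)) (d M) _ (ltW g0) dP dP' db0 (dn0 M) (E0 M) (hi M) i j.
    move=> /le_trans; apply.
    rewrite (_ : bisim_step _ _ _ _ _ (d M) i j = d M.+1 i j) //.
    apply: lerD (lo M.+1 i j) _.
    by rewrite -[X in _ <= X]mul1r ler_wpM2r // ltW.
  move: h; rewrite -lerBlDl -mulrA => h.
  by have := lt_le_trans HM h; rewrite ltxx.
- by move=> n i j; rewrite lerBlDl; exact: hi.
Qed.
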